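(* There exist a virtually abelian group $G$ and a finite generating set $S$ of $G$ (with $S=S^{-1}$, $e\notin S$) such that every finite-index free abelian subgroup of $G$ contains an element $g$ with $\kappa(g)>0$ and an element $g'$ with $\kappa(g')<0$, curvature computed with respect to $S$.
   Context: For a group $G$ with finite generating set $S$ ($S=S^{-1}$, $e\notin S$), $|x|$ denotes the word length of $x\in G$ with respect to $S$. For $g\in G$ define $\mathrm{Av}(g)=\frac{1}{|S|}\sum_{a\in S}|a^{-1}ga|$, and for $g\neq e$ define the curvature $\kappa(g)=\frac{|g|-\mathrm{Av}(g)}{|g|}$. *)

(* Defs.v *)
From HB Require Import structures.
From mathcomp Require Import all_boot all_order all_algebra.
From mathcomp Require Import boolp.
Set Implicit Arguments.
Unset Strict Implicit.
Unset Printing Implicit Defensive.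
Import Order.TTheory GRing.Theory Num.Theory.

Section GroupDefs.
Variable G : groupType.
Local Open Scope group_scope.

Definition zpow (g : G) (k : int) : G :=
  match k with
  | Posz n => g ^+ n
  | Negz n => (g ^+ n.+1)^-1
  end.

Definition is_subgroup (H : G -> Prop) : Prop :=
  H 1 /\ (forall x y, H x -> H y -> H (x * y^-1)).

Definition finite_index (H : G -> Prop) : Prop :=
  exists r : seq G, forall g : G, exists2 x, x \in r & H (x^-1 * g).

Definition abelian_sub (H : G -> Prop) : Prop :=
  forall x y, H x -> H y -> x * y = y * x.

Definition free_abelian_sub (H : G -> Prop) : Prop :=
  abelian_sub H /\
  exists (n : nat) (b : 'I_n -> G),
    (forall i, H (b i)) /\
    (forall h, H h -> exists! k : {ffun 'I_n -> int},
        h = (\prod_(i < n) zpow (b i) (k i))%g).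

Definition virtually_abelian : Prop :=
  exists H : G -> Prop, [/\ is_subgroup H, finite_index H & abelian_sub H].

Definition sym_gen_set (S : seq G) : Prop :=
  [/\ uniq S, (forall a, a \in S -> a^-1 \in S), 1 \notin S &
      forall g : G, exists w : seq G, all (mem S) w /\ (\prod_(a <- w) a)%g = g].

Definition has_word (S : seq G) (g : G) (n : nat) : Prop :=
  exists w : seq G, [/\ size w = n, all (mem S) w & (\prod_(a <- w) a)%g = g].

(* word length |g| with respect to S (0 if g is not in the span of S) *)
Definition wordlen (S : seq G) (g : G) : nat :=
  match pselect (exists n, `[< has_word S g n >]) with
  | left h => ex_minn h
  | right _ => 0%N
  end.

Local Close Scope group_scope.
Local Open Scope ring_scope.

Definition Av (S : seq G) (g : G) : rat :=
  (\sum_(a <- S) (wordlen S ((a^-1 * g * a)%g))%:R) / (size S)%:R.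

Definition kappa (S : seq G) (g : G) : rat :=
  ((wordlen S g)%:R - Av S g) / (wordlen S g)%:R.

End GroupDefs.

(* Main.v *)
Require Import Defs.
From HB Require Import structures.
From mathcomp Require Import all_boot all_order all_algebra.
From mathcomp Require Import boolp.
From mathcomp Require Import zify ring lra.
Import Order.TTheory GRing.Theory Num.Theory.
Local Open Scope ring_scope.
Section Gen.
Variable G : groupType.
Implicit Types (S : seq G) (g : G).

Lemma wl_le S g w : all (mem S) w -> (\prod_(a <- w) a)%g = g ->
  (wordlen S g <= size w)%N.
Proof.
move=> Hw Hp; rewrite /wordlen.
case: pselect => [h|[]]; last by exists (size w); apply/asboolP; exists w.
case: ex_minnP => m _ Hmin; apply: Hmin; apply/asboolP; by exists w.
Qed.

Lemma wl_ge S g (N : G -> nat) :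
  (forall g : G, exists w : seq G, all (mem S) w /\ (\prod_(a <- w) a)%g = g) ->
  N 1%g = 0%N -> (forall a h, a \in S -> (N (a * h)%g <= (N h).+1)%N) ->
  (N g <= wordlen S g)%N.
Proof.
move=> Hgen N1 NS; rewrite /wordlen.
case: pselect => [h|[]]; last first.
  by have [w [Hw Hp]] := Hgen g; exists (size w); apply/asboolP; exists w.
case: ex_minnP => m /asboolP [w [<- Hw <-]] _.
elim: w Hw => [|a w IH] /=; first by rewrite big_nil N1.
move=> /andP [Ha Hw]; rewrite big_cons.
by apply: leq_trans (NS _ _ Ha) _; rewrite ltnS IH.
Qed.

Lemma pigeon (H : G -> Prop) g : is_subgroup H -> finite_index H ->
  exists k, (0 < k)%N /\ H (g ^+ k)%g.
Proof.
move=> [H1 HM] [r Hr].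
have HV : forall a, H a -> H (a^-1)%g.
  by move=> a Ha; have := HM _ _ H1 Ha; rewrite mul1g.
have HVM : forall a b, H a -> H b -> H (a^-1 * b)%g.
  by move=> a b Ha Hb; have := HM _ _ (HV _ Ha) (HV _ Hb); rewrite invgK.
have: forall i : 'I_(size r).+1, exists j : 'I_(size r),
    H ((nth 1 r j)^-1 * g ^+ i)%g.
  move=> i; have [x xr Hx] := Hr (g ^+ i)%g.
  have xr' : (index x r < size r)%N by rewrite index_mem.
  by exists (Ordinal xr'); rewrite /= nth_index.
case/choice => f Hf.
have: ~~ injectiveb f.
  apply/negP => /injectiveP inj; have := @leq_card _ _ f inj.
  by rewrite !card_ord ltnn.
case/injectivePn => i [j nij fij].
have key : forall i j : 'I_(size r).+1, f i = f j -> (i < j)%N ->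
    exists k, (0 < k)%N /\ H (g ^+ k)%g.
  move=> i' j' fe lt; exists (j' - i')%N; split; first by rewrite subn_gt0.
  have := HVM _ _ (Hf i') (Hf j'); rewrite fe invgM invgK mulgA mulgK.
  by rewrite -{1}(subnKC (ltnW lt)) expgnDr mulKg.
case: (ltngtP i j) => [lt|lt|eq]; first exact: key fij lt.
  exact: key (esym fij) lt.
by move: nij; rewrite (val_inj eq) eqxx.
Qed.

End Gen.
Definition GT := (int * int * bool)%type.
HB.instance Definition _ := Choice.on GT.

Definition gmul (p q : GT) : GT :=
  let: (a, b, e) := p in let: (c, d, f) := q in
  if e then (a + d, b + c, e (+) f) else (a + c, b + d, e (+) f).
Definition ginv (p : GT) : GT :=
  let: (a, b, e) := p in if e then (- b, - a, e) else (- a, - b, e).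
Definition gone : GT := (0, 0, false).

Lemma gmulA : associative gmul.
Proof.
by move=> [[a b] []] [[c d] []] [[g h] []] /=; congr (_, _, _); rewrite ?addrA.
Qed.
Lemma gmul1 : left_id gone gmul.
Proof. by move=> [[a b] []] /=; rewrite !add0r. Qed.
Lemma gmulg1 : right_id gone gmul.
Proof. by move=> [[a b] []] /=; rewrite !addr0. Qed.
Lemma gmulV : left_inverse gone ginv gmul.
Proof. by move=> [[a b] []] /=; rewrite !addNr. Qed.
Lemma gmulVr : right_inverse gone ginv gmul.
Proof. by move=> [[a b] []] /=; rewrite !addrN. Qed.

HB.instance Definition _ := isGroup.Build GT gmulA gmul1 gmulg1 gmulV gmulVr.

Definition ex : GT := (1, 0, false).
Definition exi : GT := (-1, 0, false).
Definition es : GT := (0, 0, true).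
Definition ey : GT := (0, 1, false).
Definition SS : seq GT := [:: ex; exi; es].

Lemma mulE (p q : GT) : (p * q)%g = gmul p q. Proof. by []. Qed.
Lemma invE (p : GT) : (p^-1)%g = ginv p. Proof. by []. Qed.
Lemma oneE : (1%g : GT) = gone. Proof. by []. Qed.

Lemma xpow k : (ex ^+ k)%g = (k%:Z, 0, false).
Proof.
elim: k => [//|k IH]; rewrite expgS IH mulE /=; congr (_, _, _); lia.
Qed.
Lemma xipow k : (exi ^+ k)%g = (- k%:Z, 0, false).
Proof.
elim: k => [|k IH]; first by rewrite expg0 oneE /gone oppr0.
rewrite expgS IH mulE /=; congr (_, _, _); lia.
Qed.
Lemma ypow k : (ey ^+ k)%g = (0, k%:Z, false).
Proof.
elim: k => [//|k IH]; rewrite expgS IH mulE /=; congr (_, _, _); lia.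
Qed.

Lemma prod_nseq (G : groupType) (c : G) k :
  (\prod_(a <- nseq k c) a)%g = (c ^+ k)%g.
Proof. by elim: k => [|k IH]; rewrite ?big_nil // big_cons IH expgS. Qed.

Lemma wordx (a : int) : exists w : seq GT,
  all (mem SS) w /\ (\prod_(b <- w) b)%g = (a, 0, false).
Proof.
case: a => n.
  exists (nseq n ex); split; last by rewrite prod_nseq xpow.
  by elim: n.
exists (nseq n.+1 exi); split; last by rewrite prod_nseq xipow NegzE.
by elim: n.
Qed.

Lemma gen_SS (g : GT) : exists w : seq GT,
  all (mem SS) w /\ (\prod_(b <- w) b)%g = g.
Proof.
case: g => [[a b] e].
have [wa [Ha Pa]] := wordx a; have [wb [Hb Pb]] := wordx b.
exists (wa ++ es :: wb ++ es :: (if e then [:: es] else [::])).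
split.
  rewrite all_cat Ha /= all_cat Hb /=; by case: e.
rewrite big_cat Pa big_cons big_cat Pb big_cons /=.
case: e; rewrite ?big_cons big_nil /=; congr (_, _, _); lia.
Qed.

Definition NN (p : GT) : nat :=
  let: (a, b, e) := p in
  (absz a + absz b + (if e then 1 else if b != 0 then 2 else 0))%N.

Lemma NN_S a h : a \in SS -> (NN (a * h)%g <= (NN h).+1)%N.
Proof.
case: h => [[c d] f]; rewrite !inE => /or3P [] /eqP -> /=; case: f => /=;
  rewrite ?add0r; case: (d =P 0) => [->|nd] /=.
all: case: (c =P 0) => [->|nc] /=; lia.
Qed.

Lemma wl_lb (g : GT) : (NN g <= wordlen SS g)%N.
Proof. by apply: wl_ge; [exact: gen_SS | by [] | exact: NN_S]. Qed.

Lemma wlx k : wordlen SS (ex ^+ k)%g = k.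
Proof.
apply/eqP; rewrite eqn_leq; apply/andP; split.
  rewrite -[X in (_ <= X)%N](size_nseq k ex); apply: wl_le; last exact: prod_nseq.
  by elim: k.
by have := wl_lb (ex ^+ k)%g; rewrite xpow /=; lia.
Qed.

Lemma wly k : (0 < k)%N -> (k.+2 <= wordlen SS (ey ^+ k)%g)%N.
Proof.
move=> k0; have := wl_lb (ey ^+ k)%g; rewrite ypow /=.
rewrite ifT; lia.
Qed.


Lemma kappa_x k : (0 < k)%N -> kappa SS (ex ^+ k)%g < 0.
Proof.
move=> k0.
have c1 : (ex^-1 * ex ^+ k * ex)%g = (ex ^+ k)%g.
  by rewrite xpow !mulE /=; congr (_, _, _); lia.
have c2 : (exi^-1 * ex ^+ k * exi)%g = (ex ^+ k)%g.
  by rewrite xpow !mulE /=; congr (_, _, _); lia.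
have c3 : (es^-1 * ex ^+ k * es)%g = (ey ^+ k)%g.
  by rewrite xpow ypow !mulE /=; congr (_, _, _); lia.
rewrite /kappa /Av /SS !big_cons big_nil c1 c2 c3 wlx.
have := @wly k k0; set M := wordlen _ _ => hM.
have hM' : (k%:R + 2 <= M%:R :> rat).
  have h2 : ((k + 2)%N%:R <= M%:R :> rat) by rewrite ler_nat; lia.
  by rewrite natrD in h2.
have hk : (1 <= k%:R :> rat) by rewrite ler1n.
rewrite pmulr_llt0 ?invr_gt0 ?ltr0n //=.
lra.
Qed.

Lemma kappa_y k : (0 < k)%N -> 0 < kappa SS (ey ^+ k)%g.
Proof.
move=> k0.
have c1 : (ex^-1 * ey ^+ k * ex)%g = (ey ^+ k)%g.
  by rewrite ypow !mulE /=; congr (_, _, _); lia.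
have c2 : (exi^-1 * ey ^+ k * exi)%g = (ey ^+ k)%g.
  by rewrite ypow !mulE /=; congr (_, _, _); lia.
have c3 : (es^-1 * ey ^+ k * es)%g = (ex ^+ k)%g.
  by rewrite xpow ypow !mulE /=; congr (_, _, _); lia.
rewrite /kappa /Av /SS !big_cons big_nil c1 c2 c3 wlx.
have := @wly k k0; set M := wordlen _ _ => hM.
have hM' : (k%:R + 2 <= M%:R :> rat).
  have h2 : ((k + 2)%N%:R <= M%:R :> rat) by rewrite ler_nat; lia.
  by rewrite natrD in h2.
have hk : (1 <= k%:R :> rat) by rewrite ler1n.
have hMp : (0 < M%:R :> rat) by lra.
rewrite pmulr_lgt0 ?invr_gt0 //=.
lra.
Qed.

Theorem mainTheorem4 :
  exists (G : groupType) (S : seq G),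
    [/\ virtually_abelian G, sym_gen_set S &
      forall H : G -> Prop,
        is_subgroup H -> finite_index H -> free_abelian_sub H ->
        (exists g : G, [/\ H g, g <> 1%g & 0 < kappa S g]) /\
        (exists g' : G, [/\ H g', g' <> 1%g & kappa S g' < 0])].
Proof.
exists GT, SS; split.
- exists (fun p : GT => p.2 = false); split.
  + by split => // -[[a b] []] [[c d] []].
  + exists [:: gone; es] => -[[a b] e]; case: e.
      by exists es; rewrite ?inE ?eqxx ?orbT.
    by exists gone; rewrite ?inE ?eqxx.
  + move=> [[a b] []] [[c d] []] //= _ _; rewrite !mulE /=; congr (_, _, _); lia.
- split.
  + by [].
  + by move=> a; rewrite !inE => /or3P [] /eqP ->.
  + by [].
  + exact: gen_SS.
- move=> H Hs Hf _; split.
  + have [k [k0 Hk]] := @pigeon _ H ey Hs Hf.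
    exists (ey ^+ k)%g; split => //; last exact: kappa_y.
    by rewrite ypow oneE => -[]; lia.
  + have [k [k0 Hk]] := @pigeon _ H ex Hs Hf.
    exists (ex ^+ k)%g; split => //; last exact: kappa_x.
    by rewrite xpow oneE => -[]; lia.
Qed.
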